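(* Let $(X,E)$ be a locally finite reflexive directed graph, let $R$ be a commutative $\mathbb{Q}$-algebra, and let $(X,\le)$ be the associated locally finite poset ($x\le y$ iff $x=y$ or there is a walk from $x$ to $y$). The adjacency map $\xi[x,y]=|E(x,y)|$ ($x\le y$) is invertible in the incidence algebra $[\mathbb{I}_{(X,\le)},R]$, and its inverse $\mu$ satisfies $\mu[x,x]=1/|E(x,x)|$ and, for $x\ne y$ with $x\le y$, $$\mu[x,y]=\sum_{\gamma\in W(x,y)}\frac{(-1)^{l(\gamma)}}{|E(v_0,v_0)|\,|E(v_1,v_1)|\cdots|E(v_{l(\gamma)},v_{l(\gamma)})|},$$ where for $\gamma=(\gamma_1,\dots,\gamma_n)$ we set $v_0=s(\gamma_1)$ and $v_i=t(\gamma_i)$ for $1\le i\le n$.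
   Context: A directed graph $(X,E)$ has a map $(s,t):E\to X\times X$, $E(x,y)$ the edges from $x$ to $y$; reflexive means $E(x,x)\ne\emptyset$ for all $x$. A walk of length $l(\gamma)=n\ge1$ is $(\gamma_1,\dots,\gamma_n)\in E^n$ with $t(\gamma_i)=s(\gamma_{i+1})$ and $s(\gamma_i)\ne t(\gamma_i)$; $W(x,y)$ is the set of walks from $x$ to $y$. Locally finite means $E(x,x)$ and $W(x,y)$ finite for all $x,y$. For a locally finite poset, $\mathbb{I}_{(X,\le)}$ is the set of intervals $[x,y]$ ($x\le y$), and the incidence algebra $[\mathbb{I}_{(X,\le)},R]$ has product $(f\star g)[x,z]=\sum_{x\le y\le z}f[x,y]g[y,z]$ and unit $\epsilon[x,y]=\delta_{x,y}$. *)

(* Defs.v *)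
From HB Require Import structures.
From mathcomp Require Import all_boot all_order all_algebra.
From Stdlib Require Import ClassicalEpsilon.
Set Implicit Arguments. Unset Strict Implicit. Unset Printing Implicit Defensive.
Import Order.TTheory GRing.Theory Num.Theory.
Local Open Scope ring_scope.

Definition finite_set (T : eqType) (P : T -> Prop) : Prop :=
  exists l : seq T, uniq l /\ forall x, P x <-> x \in l.

(* A chosen enumeration of P (meaningful when finite_set P). *)
Definition fenum (T : eqType) (P : T -> Prop) : seq T :=
  epsilon (inhabits [::]) (fun l : seq T => uniq l /\ forall x, P x <-> x \in l).

Definition fcard (T : eqType) (P : T -> Prop) : nat := size (fenum P).
Definition fsum (T : eqType) (V : nmodType) (P : T -> Prop) (F : T -> V) : V :=
  \sum_(x <- fenum P) F x.

Definition edges (X E : eqType) (s t : E -> X) (x y : X) : E -> Prop :=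
  fun e => s e = x /\ t e = y.

Fixpoint walk_from (X E : eqType) (s t : E -> X) (x : X) (w : seq E) (y : X)
  : bool :=
  match w with
  | [::] => x == y
  | e :: w' => [&& s e == x, s e != t e & walk_from s t (t e) w' y]
  end.

Definition walk (X E : eqType) (s t : E -> X) (x y : X) : seq E -> Prop :=
  fun w => w <> [::] /\ walk_from s t x w y.

Definition reflexive_graph (X E : eqType) (s t : E -> X) : Prop :=
  forall x, exists e, edges s t x x e.

Definition locally_finite_graph (X E : eqType) (s t : E -> X) : Prop :=
  (forall x, finite_set (edges s t x x)) /\
  (forall x y, finite_set (walk s t x y)).

Definition gle (X E : eqType) (s t : E -> X) (x y : X) : Prop :=
  x = y \/ exists w, walk s t x y w.

(* Incidence functions are represented by f : X -> X -> R, f x y standing for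
   f[x,y]; only the values on intervals (x <= y) are meaningful. *)

Definition inc_mul (X E : eqType) (s t : E -> X) (R : pzRingType)
  (f g : X -> X -> R) (x z : X) : R :=
  fsum (fun y => gle s t x y /\ gle s t y z) (fun y => f x y * g y z).

Definition inc_unit (X : eqType) (R : pzRingType) (x y : X) : R :=
  if x == y then 1 else 0.

Definition inc_eq (X E : eqType) (s t : E -> X) (R : pzRingType)
  (f g : X -> X -> R) : Prop :=
  forall x y, gle s t x y -> f x y = g x y.

Definition inc_inverse (X E : eqType) (s t : E -> X) (R : pzRingType)
  (f g : X -> X -> R) : Prop :=
  inc_eq s t (inc_mul s t f g) (@inc_unit X R) /\
  inc_eq s t (inc_mul s t g f) (@inc_unit X R).

Definition adjacency (X E : eqType) (s t : E -> X) (R : pzRingType)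
  (x y : X) : R := (fcard (edges s t x y))%:R.

Definition nloops (X E : eqType) (s t : E -> X) (v : X) : nat :=
  fcard (edges s t v v).

Definition walk_weight (X E : eqType) (s t : E -> X) (w : seq E) : rat :=
  match w with
  | [::] => 0
  | e :: _ =>
      (-1) ^+ size w /
      ((nloops s t (s e))%:R * \prod_(g <- w) (nloops s t (t g))%:R)
  end.

(* Main.v *)
Require Import Defs.
From Stdlib Require Import ClassicalEpsilon Classical.
From HB Require Import structures.
From mathcomp Require Import all_boot all_order all_algebra.
From mathcomp Require Import ring.
Import Order.TTheory GRing.Theory Num.Theory.
Local Open Scope ring_scope.
Set Implicit Arguments. Unset Strict Implicit.

Lemma fenumP (T : eqType) (P : T -> Prop) : finite_set P ->
  uniq (fenum P) /\ forall x, P x <-> x \in fenum P.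
Proof. by move=> H; rewrite /fenum; exact: (epsilon_spec (inhabits [::]) _ H). Qed.

Lemma fsum_eq (T : eqType) (V : nmodType) (P : T -> Prop) (F : T -> V) (l : seq T) :
  finite_set P -> uniq l -> (forall x, P x <-> x \in l) ->
  fsum P F = \sum_(x <- l) F x.
Proof.
move=> /fenumP [u1 h1] u2 h2; rewrite /fsum; apply: perm_big.
apply: uniq_perm => // x; apply/idP/idP => H.
  by apply/h2; apply/h1.
by apply/h1; apply/h2.
Qed.

Lemma fcard_eq (T : eqType) (P : T -> Prop) (l : seq T) :
  finite_set P -> uniq l -> (forall x, P x <-> x \in l) -> Defs.fcard P = size l.
Proof.
move=> /fenumP [u1 h1] u2 h2; rewrite /Defs.fcard.
have Hp : perm_eq (fenum P) l.
  apply: uniq_perm => // x; apply/idP/idP => H.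
    by apply/h2; apply/h1.
  by apply/h1; apply/h2.
exact: perm_size Hp.
Qed.

Lemma partition_sum (T K : eqType) (V : nmodType) (l : seq T) (m : seq K)
  (key : T -> K) (F : T -> V) : uniq m -> (forall w, w \in l -> key w \in m) ->
  \sum_(w <- l) F w = \sum_(k <- m) \sum_(w <- l | key w == k) F w.
Proof.
move=> um; elim: l => [|w l IH] H; first by rewrite big_nil big1 // => k _; rewrite big_nil.
rewrite big_cons IH; last by move=> w' hw'; apply: H; rewrite inE hw' orbT.
have -> : \sum_(k <- m) \sum_(w0 <- w :: l | key w0 == k) F w0 =
   \sum_(k <- m) ((if key w == k then F w else 0) + \sum_(w0 <- l | key w0 == k) F w0).
  by apply: eq_bigr => k _; rewrite big_cons; case: ifP; rewrite ?add0r.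
rewrite big_split /=; congr (_ + _).
rewrite -big_mkcond /= big_const_seq.
have -> : count (fun k => key w == k) m = 1%N.
  have -> : count (fun k => key w == k) m = count_mem (key w) m.
    by apply: eq_count => k /=; rewrite eq_sym.
  by rewrite (count_uniq_mem (key w) um) (H w) // inE eqxx.
by rewrite /= addr0.
Qed.

Lemma sum_const_seq (T : eqType) (V : pzRingType) (l : seq T) (c : V) :
  \sum_(x <- l) c = (size l)%:R * c.
Proof. by elim: l => [|x l IH]; rewrite ?big_nil ?mul0r // big_cons IH /= mulrSr mulrDl mul1r addrC. Qed.

Section Main.
Variables (X E : eqType) (s t : E -> X).
Hypothesis Hrefl : reflexive_graph s t.
Hypothesis Hlf : locally_finite_graph s t.

Local Notation wf := (walk_from s t).

Lemma wf_cat x w1 y w2 z : wf x w1 y -> wf y w2 z -> wf x (w1 ++ w2) z.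
Proof.
elim: w1 x => [|e w1 IH] x /=; first by move/eqP->.
by case/and3P=> -> -> h1 h2; rewrite IH.
Qed.

Lemma wf_rcons x w e y :
  wf x (rcons w e) y = [&& wf x w (s e), s e != t e & t e == y].
Proof.
elim: w x => [|g w IH] x /=.
  by rewrite eq_sym; case: (s e == x).
by rewrite IH; case: (s g == x); case: (s g != t g).
Qed.

Lemma wf_split x w y z : wf x w y -> z \in map t w ->
  exists w1 w2, wf x w1 z /\ wf z w2 y /\ w1 <> [::].
Proof.
elim: w x => [|e w IH] x //= /and3P [h1 h2 h3]; rewrite inE => /orP [/eqP->|hz].
  by exists [:: e], w; rewrite /= h1 h2 eqxx h3.
have [w1 [w2 [a [b c]]]] := IH _ h3 hz.
by exists (e :: w1), w2; rewrite /= h1 h2 a b.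
Qed.

Lemma wf_last x w y : wf x w y -> w <> [::] -> y \in map t w.
Proof.
elim: w x => [|e w IH] x //= /and3P [h1 h2 h3] _.
case: w IH h3 => [|g w] IH h3 /=; first by move: h3 => /= /eqP->; rewrite inE eqxx.
by rewrite inE (IH (t e)) ?orbT.
Qed.

Lemma wf_gle x w y : wf x w y -> gle s t x y.
Proof.
case: w => [/eqP->|e w h]; first by left.
by right; exists (e :: w).
Qed.

Lemma gle_refl x : gle s t x x. Proof. by left. Qed.

Lemma gle_wf x y : gle s t x y -> exists w, wf x w y.
Proof. by case=> [->|[w [_ h]]]; [exists [::]; rewrite /= eqxx | exists w]. Qed.

Lemma gle_trans x y z : gle s t x y -> gle s t y z -> gle s t x z.
Proof.
move=> /gle_wf [w1 h1] /gle_wf [w2 h2]; exact: (wf_gle (wf_cat h1 h2)).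
Qed.

Fixpoint iterw (w : seq E) n := if n is n'.+1 then w ++ iterw w n' else w.

Lemma no_cycle x w : ~ walk s t x x w.
Proof.
move=> [wn hw].
have [l [ul hl]] := Hlf.2 x x.
have hit : forall n, wf x (iterw w n) x.
  by elim=> [|n IH] //=; apply: wf_cat hw IH.
have hsz : forall n, size (iterw w n) = (n.+1 * size w)%N.
  by elim=> [|n IH] /=; rewrite ?mul1n // size_cat IH mulSn.
have sw : (0 < size w)%N by case: w wn {hw hit hsz}.
have hu : uniq (map (iterw w) (iota 0 (size l).+1)).
  rewrite map_inj_uniq ?iota_uniq // => m n /(congr1 size).
  by rewrite !hsz => /eqP; rewrite eqn_pmul2r // => /eqP [].
have sub : {subset map (iterw w) (iota 0 (size l).+1) <= l}.
  move=> v /mapP [n _ ->]; apply/hl; split; last exact: hit.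
  by move=> /(congr1 size); rewrite hsz => /eqP; rewrite muln_eq0 /=; move/eqP: sw; case: (size w).
have := uniq_leq_size hu sub.
by rewrite size_map size_iota ltnn.
Qed.

Lemma gle_antisym x y : gle s t x y -> gle s t y x -> x = y.
Proof.
case=> // [[w1 [n1 h1]]] [// | [w2 [n2 h2]]].
exfalso; apply: (@no_cycle x (w1 ++ w2)); split; last exact: wf_cat h1 h2.
by case: (w1) n1.
Qed.

Lemma wf_nil_or x w y : wf x w y -> w = [::] \/ walk s t x y w.
Proof. by case: w => [|e w] h; [left | right; split]. Qed.

Definition V x y := fun w => wf x w y.
Definition I x y := fun z => gle s t x z /\ gle s t z y.

Lemma finV x y : finite_set (V x y).
Proof.
case: (eqVneq x y) => [<-|nxy].
  exists [:: [::]]; split => // w; rewrite inE /V; split.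
    by case/wf_nil_or => [->//|/no_cycle].
  by move/eqP->; rewrite /= eqxx.
have [l [ul hl]] := Hlf.2 x y.
exists l; split => // w; rewrite -hl /V; split.
  move=> h; case: (wf_nil_or h) => // e; move: h; rewrite e /=.
  by rewrite (negbTE nxy).
by case.
Qed.

Lemma finI x y : finite_set (I x y).
Proof.
case: (classic (gle s t x y)) => hxy; last first.
  exists [::]; split => // z; split => // [[h1 h2]].
  by exfalso; apply: hxy; apply: gle_trans h1 h2.
case: (eqVneq x y) => [<-|nxy].
  exists [:: x]; split => // z; rewrite inE; split.
    by case=> h1 h2; rewrite (gle_antisym h1 h2).
  by move/eqP->; split; apply: gle_refl.
have [l [ul hl]] := Hlf.2 x y.
exists (undup (x :: flatten (map (map t) l))); split; first exact: undup_uniq.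
move=> z; rewrite mem_undup inE; split.
  case=> h1 h2; case: (eqVneq z x) => [->|nzx]; first by apply/orP; left.
  apply/orP; right; apply/flattenP.
  case: h1 => [e|[w1 [n1 k1]]]; first by move: nzx; rewrite e; case/eqP.
  have [w2 k2] := gle_wf h2.
  exists (map t (w1 ++ w2)); first by apply/mapP; exists (w1 ++ w2) => //; apply/hl; split; [by case: (w1) n1 | exact: wf_cat k1 k2].
  by rewrite map_cat mem_cat (wf_last k1 n1).
case/orP => [/eqP->|]; first by split; [apply: gle_refl | exact: hxy].
move/flattenP => [mw /mapP [w /hl [_ hw] ->] hz].
have [w1 [w2 [a [b _]]]] := wf_split hw hz.
by split; [apply: wf_gle a | apply: wf_gle b].
Qed.

Lemma finE x y : finite_set (edges s t x y).
Proof.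
case: (eqVneq x y) => [<-|nxy]; first exact: Hlf.1.
have [l [ul hl]] := Hlf.2 x y.
exists (undup [seq e <- flatten l | [:: e] \in l]); split; first exact: undup_uniq.
move=> e; rewrite mem_undup mem_filter; split.
  case=> h1 h2.
  have he : [:: e] \in l by apply/hl; split => //=; rewrite h1 h2 !eqxx nxy.
  by rewrite he; apply/flattenP; exists [:: e] => //; rewrite inE.
by case/andP => /hl [_] /= /and3P [/eqP h1 _ /eqP h2] _; split.
Qed.


Definition nl v : rat := (nloops s t v)%:R.
Definition wt x (w : seq E) : rat := (-1) ^+ size w / (nl x * \prod_(g <- w) nl (t g)).
Definition lV x y := fenum (V x y).
Definition lI x y := fenum (I x y).
Definition lE x y := fenum (edges s t x y).
Definition M x y := \sum_(w <- lV x y) wt x w.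
Definition nE x y : rat := (size (lE x y))%:R.

Lemma nl_neq0 v : nl v != 0.
Proof.
have [e he] := Hrefl v.
have [_ h] := fenumP (finE v v).
rewrite /nl pnatr_eq0 /nloops /Defs.fcard -lt0n.
by case: (fenum _) (h e) => [|//] [/(_ he)].
Qed.

Lemma wt_cons x e w : wt x (e :: w) = - (nl x)^-1 * wt (t e) w.
Proof.
rewrite /wt /= big_cons exprS.
have := nl_neq0 x; have := nl_neq0 (t e).
have : \prod_(g <- w) nl (t g) != 0.
  by rewrite prodf_seq_neq0; apply/allP => g _; apply: nl_neq0.
move=> h1 h2 h3; field.
by rewrite h1 h2 h3.
Qed.

Lemma wt_rcons x w e : wt x (rcons w e) = - (nl (t e))^-1 * wt x w.
Proof.
rewrite /wt size_rcons big_rcons /= exprS.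
have := nl_neq0 x; have := nl_neq0 (t e).
have : \prod_(g <- w) nl (t g) != 0.
  by rewrite prodf_seq_neq0; apply/allP => g _; apply: nl_neq0.
move=> h1 h2 h3; field.
by rewrite h1 h2 h3.
Qed.

Lemma V_xx x w : V x x w <-> w = [::].
Proof.
rewrite /V; split; last by move->; rewrite /= eqxx.
by case/wf_nil_or => // /no_cycle.
Qed.

Lemma M_xx x : M x x = (nl x)^-1.
Proof.
rewrite /M -/(fsum (V x x) (wt x)) (@fsum_eq _ _ _ _ [:: [::]]).
- by rewrite big_seq1 /wt big_nil mulr1 expr0 div1r.
- exact: finV.
- by [].
by move=> w; rewrite V_xx inE; split => [->|/eqP].
Qed.

Lemma gleI x y : gle s t x y -> x \in lI x y /\ y \in lI x y.
Proof.
have [_ h] := fenumP (finI x y).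
by move=> hxy; split; apply/h; split => //; apply: gle_refl.
Qed.

Lemma M_cons x y : gle s t x y -> x != y ->
  M x y = - (nl x)^-1 * \sum_(z <- lI x y | z != x) nE x z * M z y.
Proof.
move=> hxy nxy.
have [e0 _] := Hrefl x.
have [uV hV] := fenumP (finV x y).
have [uI hI] := fenumP (finI x y).
rewrite /M (@partition_sum _ _ _ _ [seq z <- lI x y | z != x] (fun w => t (head e0 w))); first last.
- move=> w /hV; case: w => [|e w]; rewrite /V /=; first by rewrite (negbTE nxy).
  move=> /and3P [/eqP h1 h2 h3].
  rewrite /= mem_filter.
  have -> : (t e != x) by rewrite -h1 eq_sym.
  apply/hI; split; last exact: wf_gle h3.
  by right; exists [:: e]; split => //=; rewrite h1 eqxx -h1 h2 eqxx.
- exact: filter_uniq.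
rewrite -[in RHS]big_filter mulr_sumr; apply: eq_big_seq => z; rewrite mem_filter => /andP [nzx hz].
rewrite -big_filter.
have [uE hE] := fenumP (finE x z).
have [uV' hV'] := fenumP (finV z y).
rewrite (@partition_sum _ _ _ _ (lE x z) (head e0)); first last.
- move=> w; rewrite mem_filter => /andP [/eqP hz2 /hV].
  case: w hz2 => [|e w] hz2; rewrite /V /=; first by rewrite (negbTE nxy).
  by move=> /and3P [/eqP h1 h2 h3]; apply/hE; split.
- exact: uE.
have -> : \sum_(e <- lE x z) \sum_(w <- [seq w <- lV x y | t (head e0 w) == z] | head e0 w == e) wt x w
   = \sum_(e <- lE x z) (- (nl x)^-1 * M z y).
  apply: eq_big_seq => e /hE [he1 he2].
  rewrite -big_filter.
  rewrite (@perm_big _ _ _ _ _ (map (cons e) (lV z y))); last first.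
    apply: uniq_perm.
    - by rewrite !filter_uniq.
    - by rewrite map_inj_uniq // => a b [].
    move=> w; rewrite !mem_filter; apply/idP/idP.
      case/and3P => /eqP he /eqP hz3 /hV.
      case: w he hz3 => [|g w]; rewrite /V /=; first by rewrite (negbTE nxy).
      move=> -> hz4 /and3P [_ _ h3].
      by apply/mapP; exists w => //; apply/hV'; rewrite /V -hz4.
    case/mapP => w' /hV' hw ->; rewrite /= he2 !eqxx /=; apply/hV.
    by rewrite /V /= he1 he2 eqxx eq_sym nzx.
  rewrite big_map /M mulr_sumr; apply: eq_bigr => w _.
  by rewrite wt_cons he2.
by rewrite sum_const_seq /nE mulrCA.
Qed.


Lemma M_rcons x y : gle s t x y -> x != y ->
  M x y = - (nl y)^-1 * \sum_(z <- lI x y | z != y) M x z * nE z y.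
Proof.
move=> hxy nxy.
have [e0 _] := Hrefl x.
have [uV hV] := fenumP (finV x y).
have [uI hI] := fenumP (finI x y).
rewrite /M (@partition_sum _ _ _ _ [seq z <- lI x y | z != y] (fun w => s (last e0 w))); first last.
- move=> w /hV; case/lastP: w => [|w e]; rewrite /V /=; first by rewrite (negbTE nxy).
  rewrite wf_rcons last_rcons => /and3P [h1 h2 /eqP h3].
  rewrite mem_filter.
  have -> : (s e != y) by rewrite -h3.
  apply/hI; split; first exact: wf_gle h1.
  by right; exists [:: e]; split => //=; rewrite eqxx h2 h3 eqxx.
- exact: filter_uniq.
rewrite -[in RHS]big_filter mulr_sumr; apply: eq_big_seq => z; rewrite mem_filter => /andP [nzy hz].
rewrite -big_filter.
have [uE hE] := fenumP (finE z y).
have [uV' hV'] := fenumP (finV x z).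
rewrite (@partition_sum _ _ _ _ (lE z y) (last e0)); first last.
- move=> w; rewrite mem_filter => /andP [/eqP hz2 /hV].
  case/lastP: w hz2 => [|w e] hz2; rewrite /V /=; first by rewrite (negbTE nxy).
  rewrite wf_rcons => /and3P [h1 h2 /eqP h3]; apply/hE.
  by rewrite last_rcons; split => //; rewrite -hz2 last_rcons.
- exact: uE.
have -> : \sum_(e <- lE z y) \sum_(w <- [seq w <- lV x y | s (last e0 w) == z] | last e0 w == e) wt x w
   = \sum_(e <- lE z y) (- (nl y)^-1 * M x z).
  apply: eq_big_seq => e /hE [he1 he2].
  rewrite -big_filter.
  rewrite (@perm_big _ _ _ _ _ (map (rcons^~ e) (lV x z))); last first.
    apply: uniq_perm.
    - by rewrite !filter_uniq.
    - by rewrite map_inj_uniq //; apply: rcons_injl.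
    move=> w; rewrite !mem_filter; apply/idP/idP.
      case/and3P => /eqP he /eqP hz3 /hV.
      case/lastP: w he hz3 => [|w g]; rewrite /V /=; first by rewrite (negbTE nxy).
      rewrite !last_rcons => -> hz4; rewrite wf_rcons => /and3P [h1 _ _].
      by apply/mapP; exists w => //; apply/hV'; rewrite /V -hz4.
    case/mapP => w' /hV' hw ->; rewrite /= !last_rcons he1 !eqxx /=; apply/hV.
    by rewrite /V wf_rcons he1 he2 nzy eqxx !andbT; exact: hw.
  rewrite big_map /M mulr_sumr; apply: eq_bigr => w _.
  by rewrite wt_rcons he2.
by rewrite sum_const_seq /nE mulrCA; congr (_ * _); rewrite mulrC.
Qed.


Definition W (R : comAlgType rat) x y : R := (M x y)%:A.

Lemma alg_mul (R : comAlgType rat) (a b : rat) : (a%:A : R) * b%:A = (a * b)%:A.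
Proof. by rewrite mulr_algl scalerA. Qed.

Lemma adj_nE (R : comAlgType rat) x z : (@adjacency X E s t R) x z = (nE x z)%:A.
Proof. by rewrite /adjacency /nE /lE /Defs.fcard scaler_nat. Qed.

Lemma lI_mem x y z : z \in lI x y <-> gle s t x z /\ gle s t z y.
Proof. have [_ h] := fenumP (finI x y); by rewrite -h. Qed.

Lemma uniq_lI x y : uniq (lI x y).
Proof. by have [h _] := fenumP (finI x y). Qed.

Lemma inc_xi_W (R : comAlgType rat) x y : gle s t x y ->
  inc_mul s t ((@adjacency X E s t R)) (@W R) x y = inc_unit R x y.
Proof.
move=> hxy.
have -> : inc_mul s t ((@adjacency X E s t R)) (@W R) x y =
   \sum_(z <- lI x y) (@adjacency X E s t R) x z * W R z y by [].
have -> : \sum_(z <- lI x y) (@adjacency X E s t R) x z * W R z y =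
   (\sum_(z <- lI x y) nE x z * M z y)%:A.
  by rewrite scaler_suml; apply: eq_bigr => z _; rewrite adj_nE /W alg_mul.
have [hx _] := gleI hxy.
rewrite (bigD1_seq x hx (uniq_lI x y)) /= /inc_unit.
case: (eqVneq x y) => [exy|nxy].
  subst y; rewrite big1_seq ?addr0.
    by rewrite M_xx /nE /nl /nloops /Defs.fcard /lE mulfV ?scale1r // -[_%:R]/(nl x) nl_neq0.
  by move=> z /andP [nzx /lI_mem [h1 h2]]; rewrite (gle_antisym h1 h2) eqxx in nzx.
rewrite (M_cons hxy nxy) mulrA mulrN.
have -> : nE x x * (nl x)^-1 = 1 by rewrite /nE /nl /nloops /Defs.fcard /lE mulfV // -[_%:R]/(nl x) nl_neq0.
by rewrite mulN1r addNr scale0r.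
Qed.

Lemma inc_W_xi (R : comAlgType rat) x y : gle s t x y ->
  inc_mul s t (@W R) ((@adjacency X E s t R)) x y = inc_unit R x y.
Proof.
move=> hxy.
have -> : inc_mul s t (@W R) ((@adjacency X E s t R)) x y =
   \sum_(z <- lI x y) W R x z * (@adjacency X E s t R) z y by [].
have -> : \sum_(z <- lI x y) W R x z * (@adjacency X E s t R) z y =
   (\sum_(z <- lI x y) M x z * nE z y)%:A.
  by rewrite scaler_suml; apply: eq_bigr => z _; rewrite adj_nE /W alg_mul.
have [_ hy] := gleI hxy.
rewrite (bigD1_seq y hy (uniq_lI x y)) /= /inc_unit.
case: (eqVneq x y) => [exy|nxy].
  subst y; rewrite big1_seq ?addr0.
    by rewrite M_xx /nE /nl /nloops /Defs.fcard /lE mulVf ?scale1r // -[_%:R]/(nl x) nl_neq0.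
  by move=> z /andP [nzx /lI_mem [h1 h2]]; rewrite (gle_antisym h2 h1) eqxx in nzx.
rewrite (M_rcons hxy nxy) mulrC mulrA mulrN.
have -> : nE y y * (nl y)^-1 = 1 by rewrite /nE /nl /nloops /Defs.fcard /lE mulfV // -[_%:R]/(nl y) nl_neq0.
by rewrite mulN1r addNr scale0r.
Qed.


Lemma size_lI_lt x z y : gle s t x z -> gle s t z y -> x != z ->
  (size (lI z y) < size (lI x y))%N.
Proof.
move=> hxz hzy nxz.
have hxy := gle_trans hxz hzy.
have := @uniq_leq_size _ (x :: lI z y) (lI x y).
apply.
  rewrite /= uniq_lI andbT; apply/negP => /lI_mem [h1 _].
  by rewrite (gle_antisym hxz h1) eqxx in nxz.
move=> w; rewrite inE => /orP [/eqP ->|/lI_mem [h1 h2]]; apply/lI_mem.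
  by split => //; apply: gle_refl.
by split => //; apply: gle_trans hxz h1.
Qed.

Lemma uniqueness (R : comAlgType rat) (mu : X -> X -> R) :
  (forall x y, gle s t x y -> inc_mul s t (@adjacency X E s t R) mu x y = inc_unit R x y) ->
  forall x y, gle s t x y -> mu x y = W R x y.
Proof.
move=> Hmu.
suff H : forall n x y, (size (lI x y) <= n)%N -> gle s t x y -> mu x y = W R x y.
  by move=> x y; apply: (H _ x y (leqnn _)).
elim=> [|n IH] x y hn hxy.
  have [hx _] := gleI hxy.
  by move: hn; case: (lI x y) hx.
have h1 := Hmu x y hxy; have h2 := inc_xi_W R hxy.
have e1 : inc_mul s t (@adjacency X E s t R) mu x y =
   \sum_(z <- lI x y) (@adjacency X E s t R) x z * mu z y by [].
have e2 : inc_mul s t (@adjacency X E s t R) (@W R) x y =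
   \sum_(z <- lI x y) (@adjacency X E s t R) x z * W R z y by [].
have hd : \sum_(z <- lI x y) (@adjacency X E s t R) x z * (mu z y - W R z y) = 0.
  under eq_bigr do rewrite mulrBr.
  by rewrite sumrB -e1 -e2 h1 h2 subrr.
have [hx _] := gleI hxy.
rewrite (bigD1_seq x hx (uniq_lI x y)) /= big1_seq ?addr0 in hd; last first.
  move=> z /andP [nzx /lI_mem [k1 k2]].
  rewrite (IH z y) ?subrr ?mulr0 //.
  have nxz : x != z by rewrite eq_sym.
  have := size_lI_lt k1 k2 nxz.
  by move=> lt; rewrite -ltnS; apply: leq_trans lt hn.
apply/eqP; rewrite -subr_eq0; apply/eqP.
have := congr1 (fun v => ((nl x)^-1)%:A * v) hd.
rewrite /= mulr0 adj_nE mulrA alg_mul.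
have -> : (nl x)^-1 * nE x x = 1.
  by rewrite /nE /nl /nloops /Defs.fcard /lE mulVf // -[_%:R]/(nl x) nl_neq0.
by rewrite scale1r mul1r.
Qed.

End Main.

Theorem theorem4p2 (X E : eqType) (s t : E -> X) (R : comAlgType rat)
  (Hrefl : reflexive_graph s t) (Hlf : locally_finite_graph s t) :
  (exists mu : X -> X -> R, inc_inverse s t (@adjacency X E s t R) mu) /\
  (forall mu : X -> X -> R, inc_inverse s t (@adjacency X E s t R) mu ->
     (forall x, mu x x = ((nloops s t x)%:R^-1 : rat)%:A) /\
     (forall x y, x <> y -> gle s t x y ->
        mu x y = (fsum (walk s t x y) (fun w => walk_weight s t w))%:A)).
Proof.
split.
  exists (@W X E s t R); split => x y hxy.
    exact: inc_xi_W.
  exact: inc_W_xi.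
move=> mu [Hl _].
have Hu := uniqueness Hrefl Hlf Hl.
split.
  move=> x; rewrite (Hu x x (gle_refl s t x)) /W M_xx //.
move=> x y nxy hxy; rewrite (Hu x y hxy) /W; congr (_ %:A).
have [uV hV] := fenumP (finV Hlf x y).
rewrite (@fsum_eq _ _ _ _ (lV s t x y)).
- rewrite /M; apply: eq_big_seq => w /hV.
  case: w => [|e w]; rewrite /V /=; first by move/eqP.
  by case/and3P => /eqP he _ _; rewrite /walk_weight /wt he.
- exact: Hlf.2.
- exact: uV.
move=> w; rewrite -hV /V /walk; split; first by case.
move=> h; split => //; move=> e; move: h; rewrite e /=; move/eqP; exact: nxy.
Qed.
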